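(* Let $f\in\mathcal S'(\mathbb R^d)$ (possibly depending on time), $s\ge0$, $r\in[1,\infty]$ and $t>0$. Then $$\|f\|_{\widetilde L^r_t(\dot{\mathbb B}^s_{2,1})}\le\|f\|^\ell_{\widetilde L^r_t(\dot{\mathbb B}^s_{2,1})}+2^{k_0}\|\varepsilon b(\tau)f\|^h_{\widetilde L^r_t(\dot{\mathbb B}^{s+1}_{2,1})}$$ and $$\|f\|_{\widetilde L^r_t(\dot{\mathbb B}^s_{2,1})}\le2^{-k_0}\|(\varepsilon b(\tau))^{-1}f\|^\ell_{\widetilde L^r_t(\dot{\mathbb B}^{s-1}_{2,1})}+\|f\|^h_{\widetilde L^r_t(\dot{\mathbb B}^s_{2,1})}.$$
   Context: Parameters: $\varepsilon\in(0,1]$, $\mu>0$, $\lambda\le1$, $b(t)=(1+t)^\lambda/\mu$, $k_0\in\mathbb Z$ a fixed constant, $J_t=\lfloor\log_2\frac{1}{\varepsilon b(t)}\rfloor-k_0$. $\dot\Delta_j$ are homogeneous Littlewood–Paley blocks. $\|f\|_{\widetilde L^r_t(\dot{\mathbb B}^s_{2,1})}=\sum_{j\in\mathbb Z}2^{js}\|\|\dot\Delta_jf(\tau)\|_{L^2}\|_{L^r(0,t)}$. With $I^\ell_{j,t}=\{\tau\in[0,t]:j\le J_\tau\}$, $I^h_{j,t}=\{\tau\in[0,t]:j\ge J_\tau\}$: $\|f\|^\ell_{\widetilde L^r_t(\dot{\mathbb B}^s_{2,1})}=\sum_{j:I^\ell_{j,t}\neq\emptyset}2^{js}\|\|\dot\Delta_jf(\tau)\|_{L^2}\|_{L^r(I^\ell_{j,t})}$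 and $\|f\|^h_{\widetilde L^r_t(\dot{\mathbb B}^s_{2,1})}$ defined likewise with $I^h_{j,t}$. *)

(* Defs.v *)
From mathcomp Require Import all_boot all_order all_algebra.
From mathcomp Require Import all_classical all_reals all_analysis.
From mathcomp Require Import measurable_realfun.
Set Implicit Arguments. Unset Strict Implicit. Unset Printing Implicit Defensive.
Import Order.TTheory GRing.Theory Num.Theory.
Local Open Scope classical_set_scope.
Local Open Scope ring_scope.

Section Defs.
Context {R : realType}.

Definition bfun (mu lam tau : R) : R := (1 + tau) `^ lam / mu.

Definition Jt (eps mu lam : R) (k0 : int) (tau : R) : int :=
  (Num.floor (ln ((eps * bfun mu lam tau)^-1) / ln 2) - k0)%R.

Definition Itime (t : R) : set R := [set tau | 0 <= tau <= t].

Definition Ilow (J : R -> int) (t : R) (j : int) : set R :=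
  [set tau | Itime t tau /\ (j <= J tau)%R].
Definition Ihigh (J : R -> int) (t : R) (j : int) : set R :=
  [set tau | Itime t tau /\ (J tau <= j)%R].

Definition LrI (r : \bar R) (I : set R) (g : R -> \bar R) : \bar R :=
  Lnorm (@lebesgue_measure R) r (fun tau => ((\1_I tau : R)%:E * g tau)%E).

(* In the abstract setting, a j tau stands for || \dot\Delta_j f(tau) ||_{L^2}. *)
Definition LtB (r : \bar R) (s t : R) (a : int -> R -> \bar R) : \bar R :=
  \esum_(j in [set: int]) ((2 `^ (j%:~R * s))%:E * LrI r (Itime t) (a j))%E.

Definition LtBlow (r : \bar R) (s t : R) (J : R -> int) (a : int -> R -> \bar R) : \bar R :=
  \esum_(j in [set j | Ilow J t j !=set0])
     ((2 `^ (j%:~R * s))%:E * LrI r (Ilow J t j) (a j))%E.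

Definition LtBhigh (r : \bar R) (s t : R) (J : R -> int) (a : int -> R -> \bar R) : \bar R :=
  \esum_(j in [set j | Ihigh J t j !=set0])
     ((2 `^ (j%:~R * s))%:E * LrI r (Ihigh J t j) (a j))%E.

Definition meas_on (t : R) (g : R -> \bar R) : Prop := measurable_fun (Itime t) g.

End Defs.

(* Main.v *)
Require Import Defs.
From mathcomp Require Import all_boot all_order all_algebra.
From mathcomp Require Import all_classical all_reals all_analysis.
From mathcomp Require Import measurable_realfun.
From mathcomp Require Import ring lra ess_sup_inf.
Import Order.TTheory GRing.Theory Num.Theory.
Local Open Scope classical_set_scope.
Local Open Scope ring_scope.

Local Close Scope ereal_scope.
Lemma powR_subadd (R : realType) (q x y : R) : 0 < q <= 1 -> 0 <= x -> 0 <= y ->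
  (x + y) `^ q <= x `^ q + y `^ q.
Proof.
move=> /andP[q0 q1] x0 y0.
have [s0|spos] := eqVneq (x + y) 0.
  have x0' : x = 0 by lra.
  have y0' : y = 0 by lra.
  by rewrite s0 x0' y0' powR0 ?gt_eqF// addr0.
have sp : 0 < x + y by rewrite lt_neqAle eq_sym spos addr_ge0.
have key : forall z : R, 0 <= z -> z <= x + y -> (x + y) `^ q * (z / (x + y)) <= z `^ q.
  move=> z z0 zs.
  have -> : z `^ q = (x + y) `^ q * (z / (x + y)) `^ q.
    have e : (x + y) * (z / (x + y)) = z by field; rewrite gt_eqF.
    by rewrite -powRM ?divr_ge0 ?(ltW sp)// e.
  rewrite ler_wpM2l ?powR_ge0//.
  have [->|zp] := eqVneq z 0; first by rewrite mul0r powR_ge0.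
  apply: ger1_powR => //.
  have zpos : 0 < z by rewrite lt_neqAle eq_sym zp z0.
  by rewrite divr_gt0 //= ler_pdivrMr // mul1r.
apply: le_trans (lerD (key x x0 _) (key y y0 _)); [|lra|lra].
by rewrite -mulrDr -mulrDl divff ?gt_eqF// mulr1.
Qed.

Local Open Scope ereal_scope.
Lemma poweR_subadd (R : realType) (q : R) (x y : \bar R) : (0 < q <= 1)%R -> 0 <= x -> 0 <= y ->
  (x + y) `^ q <= x `^ q + y `^ q.
Proof.
move=> q01 x0 y0; have qn0 : (q != 0)%R by case/andP: q01 => /gt_eqF ->.
case: x x0 => [x| |]// x0; case: y y0 => [y| |]// y0.
- by rewrite -EFinD !poweR_EFin -EFinD lee_fin powR_subadd.
- by rewrite addey// poweRyr// addey ?leey// poweR_EFin.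
- by rewrite addye// poweRyr// addye ?leey.
- by rewrite addye// poweRyr// addye ?leey.
Qed.

Lemma esumZ_le (R : realType) (T : choiceType) (I : set T) (a : T -> \bar R) (c : R) :
  (0 <= c)%R -> (forall i, 0 <= a i) ->
  \esum_(i in I) (c%:E * a i) <= c%:E * \esum_(i in I) a i.
Proof.
move=> c0 a0; rewrite ge_ereal_sup//= => _ [X [finX XI]] <-.
rewrite fsbig_finite//= -ge0_sume_distrr; try by move=> i _; exact: a0.
apply: lee_wpmul2l; first by rewrite lee_fin.
by rewrite -fsbig_finite//; apply: ereal_sup_ubound; exists X.
Qed.

Definition ind {R : realType} (S : set R) (f : R -> \bar R) :=
  fun tau => ((\1_S tau : R)%:E * f tau)%E.

Lemma LrIE (R : realType) r S (f : R -> \bar R) : LrI r S f = Lnorm (@lebesgue_measure R) r (ind S f).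
Proof. by []. Qed.

Lemma ptw (R : realType) (phi : \bar R -> \bar R) (D A B : set R) f :
  phi 0 = 0 -> (forall x, 0 <= phi x) -> D `<=` A `|` B ->
  forall x, phi (ind D f x) <= phi (ind A f x) + phi (ind B f x).
Proof.
move=> p0 pge0 DAB x; rewrite /ind !indicE.
have [Dx|nDx] := pselect (D x); last first.
  by rewrite (memNset nDx) mul0e p0 adde_ge0.
rewrite (mem_set Dx) mul1e.
case: (DAB x Dx) => [Ax|Bx].
  by rewrite (mem_set Ax) mul1e leeDl.
by rewrite (mem_set Bx) mul1e leeDr.
Qed.

Lemma ptw_mono (R : realType) (B E : set R) f g :
  B `<=` E -> (forall x, B x -> `|f x| <= `|g x|) ->
  forall x, `|ind B f x| <= `|ind E g x|.
Proof.
move=> BE fg x; rewrite /ind !indicE.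
have [Bx|nBx] := pselect (B x); last first.
  by rewrite (memNset nBx) mul0e abse0 abse_ge0.
by rewrite (mem_set Bx) (mem_set (BE _ Bx)) !mul1e fg.
Qed.

Lemma L_split (R : realType) r (D A B : set R) f : 1 <= r ->
  measurable_fun setT (ind D f) -> measurable_fun setT (ind A f) ->
  measurable_fun setT (ind B f) -> D `<=` A `|` B ->
  LrI r D f <= LrI r A f + LrI r B f.
Proof.
move=> r1 mD mA mB DAB; rewrite !LrIE unlock.
case: r r1 => [p| |]//; rewrite ?lee_fin => p1.
  have p0 : (0 < p)%R by apply: lt_le_trans p1.

  have mg : forall S : set R, measurable_fun setT (ind S f) ->
      measurable_fun setT (fun x => `|ind S f x| `^ p).
    move=> S mS; apply: (measurableT_comp (measurable_poweR p)).
    by apply: measurableT_comp mS; exact: abse_measurable.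
  have pi : (0 < p^-1 <= 1)%R.
    by rewrite invr_gt0 p0 /= invf_le1.
  apply: le_trans; last first.
    apply: poweR_subadd => //.
    - by apply: integral_ge0 => x _; exact: poweR_ge0.
    - by apply: integral_ge0 => x _; exact: poweR_ge0.
  rewrite -ge0_integralD//; last 4 first.
  - by move=> x _; exact: poweR_ge0.
  - exact: mg.
  - by move=> x _; exact: poweR_ge0.
  - exact: mg.
  apply: gt0_ler_poweR; rewrite ?invr_ge0 ?(ltW p0)// ?in_itv/= ?leey ?andbT.
  - by apply: integral_ge0 => x _; exact: poweR_ge0.
  - by apply: integral_ge0 => x _; rewrite adde_ge0 ?poweR_ge0.
  apply: ge0_le_integral => //.
  - by move=> x _; exact: poweR_ge0.
  - exact: mg.
  - by apply: emeasurable_funD; apply: mg.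
  move=> x _; apply: (@ptw _ (fun y => `|y| `^ p)) => //.
  - by rewrite abse0 poweR0r// gt_eqF.
  - by move=> y; exact: poweR_ge0.
case: ifPn => _; last by rewrite adde0.
apply: le_trans _ (ess_supD _ _ _); apply: le_ess_sup; apply: nearW => x /=.
by apply: (@ptw _ abse) => //; rewrite abse0.
Qed.

Lemma mpow (R : realType) (S : set R) f (p : R) : measurable_fun setT (ind S f) ->
  measurable_fun setT (fun x => `|ind S f x| `^ p).
Proof.
move=> mS; apply: (measurableT_comp (measurable_poweR p)).
by apply: measurableT_comp mS; exact: abse_measurable.
Qed.

Lemma L_mono (R : realType) r (B E : set R) f g : 1 <= r ->
  measurable_fun setT (ind B f) -> measurable_fun setT (ind E g) ->
  B `<=` E -> (forall x, B x -> `|f x| <= `|g x|) ->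
  LrI r B f <= LrI r E g.
Proof.
move=> r1 mB mE BE fg; rewrite !LrIE unlock.
case: r r1 => [p| |]//; rewrite ?lee_fin => p1.
  have p0 : (0 < p)%R by apply: lt_le_trans p1.
  apply: gt0_ler_poweR; rewrite ?invr_ge0 ?(ltW p0)// ?in_itv/= ?leey ?andbT.
  - by apply: integral_ge0 => x _; exact: poweR_ge0.
  - by apply: integral_ge0 => x _; exact: poweR_ge0.
  apply: ge0_le_integral => //.
  - by move=> x _; exact: poweR_ge0.
  - exact: mpow.
  - exact: mpow.
  move=> x _; apply: gt0_ler_poweR; rewrite ?(ltW p0)// ?in_itv/= ?leey ?andbT ?abse_ge0//.
  exact: ptw_mono.
case: ifPn => _ //; apply: le_ess_sup; apply: nearW => x /=; exact: ptw_mono.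
Qed.

Lemma L_scale (R : realType) r (E : set R) g (c : R) : (0 < c)%R -> 1 <= r ->
  measurable_fun setT (ind E g) ->
  LrI r E (fun x => c%:E * g x) = c%:E * LrI r E g.
Proof.
move=> c0 r1 mE; rewrite !LrIE unlock.
have indZ : forall x, ind E (fun x => c%:E * g x) x = c%:E * ind E g x.
  by move=> x; rewrite /ind muleCA.
case: r r1 => [p| |]//; rewrite ?lee_fin => p1.
  have p0 : (0 < p)%R by apply: lt_le_trans p1.
  under eq_integral => x _ do rewrite indZ abseM poweRM ?abse_ge0// gee0_abs ?lee_fin ?(ltW c0)// poweR_EFin.
  rewrite ge0_integralZl_EFin //; last 3 first.
  - by move=> x _; exact: poweR_ge0.
  - exact: mpow.
  - exact: powR_ge0.
  rewrite poweRM ?lee_fin ?powR_ge0//; last by apply: integral_ge0 => x _; exact: poweR_ge0.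
  by rewrite poweR_EFin -powRrM mulfV ?gt_eqF// powRr1 ?ltW.
case: ifPn => _; last by rewrite mule0.
rewrite -ess_sup_pZl//; congr ess_sup; apply/funext => x /=.
by rewrite indZ abseM gee0_abs// lee_fin ltW.
Qed.

Lemma ind_restrict (R : realType) (S : set R) f : ind S f = f \_ S.
Proof.
apply/funext => x; rewrite /ind /patch indicE.
by case: (x \in S); rewrite ?mul1e ?mul0e.
Qed.

Lemma LrI_set0 (R : realType) r (f : R -> \bar R) : 1 <= r -> LrI r set0 f = 0.
Proof.
move=> r1; rewrite LrIE (_ : ind set0 f = cst 0); first by rewrite Lnorm0// gt_eqF// (lt_le_trans _ r1).
by apply/funext => x; rewrite /ind indic0 /= mul0e.
Qed.

Local Close Scope ereal_scope.

Theorem lemma3p1 (R : realType) (eps mu lam : R) (k0 : int)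
  (a : int -> R -> \bar R) (s : R) (r : \bar R) (t : R) :
  0 < eps <= 1 -> 0 < mu -> lam <= 1 ->
  (forall j tau, (0 <= a j tau)%E) ->
  (forall j, meas_on t (a j)) ->
  0 <= s -> (1 <= r)%E -> 0 < t ->
  let J := Jt eps mu lam k0 in
  (LtB r s t a <=
     LtBlow r s t J a
     + (2 `^ k0%:~R)%:E
       * LtBhigh r (s + 1) t J (fun j tau => (eps * bfun mu lam tau)%:E * a j tau))%E
  /\
  (LtB r s t a <=
     (2 `^ (- k0%:~R))%:E
       * LtBlow r (s - 1) t J (fun j tau => (eps * bfun mu lam tau)^-1%:E * a j tau)
     + LtBhigh r s t J a)%E.
Proof.
move=> /andP[e0 e1] mu0 lam1 a0 ma s0 r1 t0 J.
pose eb tau := eps * bfun mu lam tau.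
have ebpos : forall tau, 0 <= tau -> 0 < eb tau.
  move=> tau tau0; rewrite /eb /bfun mulr_gt0 ?divr_gt0// powR_gt0//.
  by rewrite (lt_le_trans ltr01)// lerDl.
have meb : measurable_fun setT eb.
  apply: measurable_funM; first exact: measurable_cst.
  apply: measurable_funM; last exact: measurable_cst.
  apply: (measurableT_comp (@measurable_powR R lam)).
  by apply: measurable_funD => //; exact: measurable_cst.
pose x tau := ln (eb tau) * - (ln 2)^-1.
have mx : measurable_fun setT x.
  apply: measurable_funM; last exact: measurable_cst.
  exact: measurableT_comp (@measurable_ln R) meb.
have L0 : 0 < ln (2 : R) by apply: ln_gt0; rewrite ltr1n.
have Jx : forall tau, 0 <= tau -> J tau = (Num.floor (x tau) - k0)%R.
  move=> tau tau0; rewrite /J /Jt; congr (Num.floor _ - _)%R.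
  by rewrite lnV ?posrE ?ebpos// /x /eb mulNr mulrN.
have mIt : measurable (Itime t).
  rewrite (_ : Itime t = `[0, t]%classic); first exact: measurable_itv.
  by apply/seteqP; split => tau /=; rewrite in_itv.
have mIge : forall c : R, measurable (Itime t `&` [set tau | c <= x tau]).
  move=> c; apply: measurableI => //.
  have := mx measurableT _ (measurable_itv `[c, +oo[); rewrite setTI.
  by congr measurable; apply/seteqP; split => tau /=; rewrite in_itv /= andbT.
have mIlt : forall c : R, measurable (Itime t `&` [set tau | x tau < c]).
  move=> c; apply: measurableI => //.
  have := mx measurableT _ (measurable_itv `]-oo, c[); rewrite setTI.
  by congr measurable; apply/seteqP; split => tau /=; rewrite in_itv /=.
have Ilow_eq : forall j, Ilow J t j = Itime t `&` [set tau | (j + k0)%:~R <= x tau].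
  move=> j; apply/seteqP; split => tau [It h]; split => //; move: h;
    rewrite /= Jx; try by case/andP: It.
  - by rewrite lerBrDr floor_ge_int.
  - by rewrite lerBrDr floor_ge_int.
have Ihigh_eq : forall j, Ihigh J t j = Itime t `&` [set tau | x tau < (j + k0 + 1)%:~R].
  move=> j; apply/seteqP; split => tau [It h]; split => //; move: h;
    rewrite /= Jx; try by case/andP: It.
  - by rewrite lerBlDr -ltzD1 floor_lt_int.
  - by rewrite lerBlDr -ltzD1 floor_lt_int.
have mind : forall (S : set R) f, measurable S -> S `<=` Itime t ->
    measurable_fun (Itime t) f -> measurable_fun setT (ind S f).
  move=> S f mS SI mf; rewrite ind_restrict; apply/(measurable_restrictT _ _).1 => //.
  exact: measurable_funS mIt SI mf.
have mIlow : forall j, measurable (Ilow J t j) by move=> j; rewrite Ilow_eq.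
have mIhigh : forall j, measurable (Ihigh J t j) by move=> j; rewrite Ihigh_eq.
have sIlow : forall j, Ilow J t j `<=` Itime t by move=> j tau [].
have sIhigh : forall j, Ihigh J t j `<=` Itime t by move=> j tau [].
have mg1 : forall j, measurable_fun (Itime t) (fun tau => (eb tau)%:E * a j tau)%E.
  move=> j; apply: emeasurable_funM; last exact: ma.
  by apply/measurable_EFinP; exact: measurable_funS measurableT (subsetT _) meb.
have mg2 : forall j, measurable_fun (Itime t) (fun tau => (eb tau)^-1%:E * a j tau)%E.
  move=> j; apply: emeasurable_funM; last exact: ma.
  apply/measurable_EFinP.
  have h : {in Itime t, (fun tau => mu / eps * (1 + tau) `^ (- lam)) =1 (fun tau => (eb tau)^-1)}.
    move=> tau /[!inE] /andP[tau0 _].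
    have P0 : 0 < (1 + tau) `^ lam by rewrite powR_gt0// (lt_le_trans ltr01)// lerDl.
    rewrite /eb /bfun powRN; field.
    by rewrite !gt_eqF.
  have mh : measurable_fun (Itime t) (fun tau : R => mu / eps * (1 + tau) `^ (- lam)).
    apply: measurable_funS measurableT (subsetT _) _.
    apply: measurable_funM; first exact: measurable_cst.
    apply: (measurableT_comp (@measurable_powR R (- lam))).
    by apply: measurable_funD => //; exact: measurable_cst.
  exact: eq_measurable_fun h mh.
have R1 : forall tau (n : R), 0 <= tau -> x tau < n -> 1 <= 2 `^ n * eb tau.
  move=> tau n tau0 h.
  have P : 0 < 2 `^ n * eb tau by rewrite mulr_gt0 ?powR_gt0 ?ebpos.
  rewrite -ler_ln ?posrE// ln1 lnM ?posrE ?powR_gt0 ?ebpos// ln_powR.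
  move: h; rewrite /x mulrN -mulNr ltr_pdivrMr//; lra.
have R2 : forall tau (n : R), 0 <= tau -> n <= x tau -> 1 <= 2 `^ (- n) * (eb tau)^-1.
  move=> tau n tau0 h.
  have P : 0 < 2 `^ (- n) * (eb tau)^-1 by rewrite mulr_gt0 ?powR_gt0 ?invr_gt0 ?ebpos.
  rewrite -ler_ln ?posrE// ln1 lnM ?posrE ?powR_gt0 ?invr_gt0 ?ebpos// ln_powR lnV ?posrE ?ebpos//.
  move: h; rewrite /x mulrN -mulNr ler_pdivlMr//; lra.
have two0 : (2 : R) != 0 by rewrite pnatr_eq0.
have Lge0 : forall (S : set R) f, (0 <= LrI r S f)%E by move=> S f; exact: Lnorm_ge0.
have step1 : forall j, ((2 `^ (j%:~R * s))%:E * LrI r (Itime t) (a j) <=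
   (2 `^ (j%:~R * s))%:E * LrI r (Ilow J t j) (a j) +
   (2 `^ k0%:~R)%:E * ((2 `^ (j%:~R * (s + 1)))%:E *
     LrI r (Ihigh J t j) (fun tau => (eb tau)%:E * a j tau)))%E.
  move=> j; pose n : R := (j + k0)%:~R.
  pose B := Itime t `&` [set tau | x tau < n].
  have mB : measurable B := mIlt n.
  have sB : B `<=` Itime t by move=> tau [].
  have BH : B `<=` Ihigh J t j.
    rewrite Ihigh_eq => tau [It h]; split => //=; apply: lt_trans h _.
    by rewrite /n ltr_int ltzD1.
  have H1 : (LrI r (Itime t) (a j) <= LrI r (Ilow J t j) (a j) + LrI r B (a j))%E.
    apply: L_split => //.
    - exact: mind _ _ mIt (@subset_refl _ _) (ma j).
    - exact: mind _ _ (mIlow j) (sIlow j) (ma j).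
    - exact: mind _ _ mB sB (ma j).
    move=> tau It; have [h|h] := leP n (x tau).
      by left; rewrite Ilow_eq.
    by right.
  have H2 : (LrI r B (a j) <= (2 `^ n)%:E * LrI r (Ihigh J t j) (fun tau => (eb tau)%:E * a j tau))%E.
    rewrite -L_scale ?powR_gt0//; last exact: mind _ _ (mIhigh j) (sIhigh j) (mg1 j).
    apply: L_mono => //.
    - exact: mind _ _ mB sB (ma j).
    - apply: mind (mIhigh j) (sIhigh j) _.
      by apply: emeasurable_funM => //; try exact: mg1.
    move=> tau [/andP[tau0 _] h].
    have ebp := ebpos _ tau0.
    rewrite !gee0_abs ?mule_ge0 ?lee_fin ?powR_ge0 ?a0 ?(ltW ebp)//.
    by rewrite muleA -EFinM lee_pemull ?a0// lee_fin R1.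
  apply: le_trans (lee_wpmul2l _ H1) _; first by rewrite lee_fin powR_ge0.
  rewrite ge0_muleDr ?Lge0//; apply: leeD2l.
  apply: le_trans (lee_wpmul2l _ H2) _; first by rewrite lee_fin powR_ge0.
  rewrite !muleA -!EFinM; apply: lee_wpmul2r; first exact: Lnorm_ge0.
  rewrite lee_fin -!powRD ?two0 ?implybT//.
  by rewrite (_ : j%:~R * s + n = k0%:~R + j%:~R * (s + 1)) // /n intrD; ring.
have step2 : forall j, ((2 `^ (j%:~R * s))%:E * LrI r (Itime t) (a j) <=
   (2 `^ (- k0%:~R))%:E * ((2 `^ (j%:~R * (s - 1)))%:E *
     LrI r (Ilow J t j) (fun tau => ((eb tau)^-1)%:E * a j tau)) +
   (2 `^ (j%:~R * s))%:E * LrI r (Ihigh J t j) (a j))%E.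
  move=> j; pose n : R := (j + k0)%:~R.
  have H1 : (LrI r (Itime t) (a j) <= LrI r (Ilow J t j) (a j) + LrI r (Ihigh J t j) (a j))%E.
    apply: L_split => //.
    - exact: mind _ _ mIt (@subset_refl _ _) (ma j).
    - exact: mind _ _ (mIlow j) (sIlow j) (ma j).
    - exact: mind _ _ (mIhigh j) (sIhigh j) (ma j).
    move=> tau It; have [h|h] := leP n (x tau).
      by left; rewrite Ilow_eq.
    right; rewrite Ihigh_eq; split => //=; apply: lt_trans h _.
    by rewrite /n ltr_int ltzD1.
  have H2 : (LrI r (Ilow J t j) (a j) <= (2 `^ (- n))%:E *
      LrI r (Ilow J t j) (fun tau => ((eb tau)^-1)%:E * a j tau))%E.
    rewrite -L_scale ?powR_gt0//; last exact: mind _ _ (mIlow j) (sIlow j) (mg2 j).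
    apply: L_mono => //.
    - exact: mind _ _ (mIlow j) (sIlow j) (ma j).
    - apply: mind (mIlow j) (sIlow j) _.
      by apply: emeasurable_funM => //; try exact: mg2.
    rewrite Ilow_eq; move=> tau [/andP[tau0 _] h].
    have ebp := ebpos _ tau0.
    rewrite !gee0_abs ?mule_ge0 ?lee_fin ?powR_ge0 ?a0 ?invr_ge0 ?(ltW ebp)//.
    by rewrite muleA -EFinM lee_pemull ?a0// lee_fin R2.
  apply: le_trans (lee_wpmul2l _ H1) _; first by rewrite lee_fin powR_ge0.
  rewrite ge0_muleDr ?Lge0//; apply: leeD => //.
  apply: le_trans (lee_wpmul2l _ H2) _; first by rewrite lee_fin powR_ge0.
  rewrite !muleA -!EFinM; apply: lee_wpmul2r; first exact: Lnorm_ge0.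
  rewrite lee_fin -!powRD ?two0 ?implybT//.
  by rewrite (_ : j%:~R * s + - n = - k0%:~R + j%:~R * (s - 1)) // /n intrD; ring.
have empty_set : forall (S : set R), ~ (S !=set0) -> S = set0.
  move=> S h; apply/seteqP; split => // tau St; apply: h; by exists tau.
have low_all : forall s' (f : int -> R -> \bar R), LtBlow r s' t J f =
    \esum_(j in [set: int]) ((2 `^ (j%:~R * s'))%:E * LrI r (Ilow J t j) (f j))%E.
  move=> s' f; apply: eq_trans (esum_mkcond _ _) _; apply: eq_esum => j _.
  case: ifPn => // /negP h.
  rewrite (empty_set (Ilow J t j)) ?LrI_set0 ?mule0// => h'; apply: h; rewrite inE; exact: h'.
have high_all : forall s' (f : int -> R -> \bar R), LtBhigh r s' t J f =
    \esum_(j in [set: int]) ((2 `^ (j%:~R * s'))%:E * LrI r (Ihigh J t j) (f j))%E.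
  move=> s' f; apply: eq_trans (esum_mkcond _ _) _; apply: eq_esum => j _.
  case: ifPn => // /negP h.
  rewrite (empty_set (Ihigh J t j)) ?LrI_set0 ?mule0// => h'; apply: h; rewrite inE; exact: h'.
rewrite !low_all !high_all /LtB; split.
  apply: le_trans (le_esum (fun j _ => step1 j)) _.
  rewrite esumD; last 2 first.
  - by move=> j _; rewrite mule_ge0 ?lee_fin ?powR_ge0 ?Lge0.
  - by move=> j _; rewrite !mule_ge0 ?lee_fin ?powR_ge0 ?Lge0.
  apply: leeD => //; apply: esumZ_le; first exact: powR_ge0.
  by move=> j; rewrite mule_ge0 ?lee_fin ?powR_ge0 ?Lge0.
apply: le_trans (le_esum (fun j _ => step2 j)) _.
rewrite esumD; last 2 first.
- by move=> j _; rewrite !mule_ge0 ?lee_fin ?powR_ge0 ?Lge0.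
- by move=> j _; rewrite mule_ge0 ?lee_fin ?powR_ge0 ?Lge0.
apply: leeD => //; apply: esumZ_le; first exact: powR_ge0.
by move=> j; rewrite mule_ge0 ?lee_fin ?powR_ge0 ?Lge0.
Qed.
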